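(* Every positive stochastic choice function on a finite set $X$ is an unrestricted generalized nested logit.
   Context: $X$ is a finite set, $\mathscr{A}$ the nonempty subsets; a stochastic choice function is $p:X\times\mathscr{A}\to[0,1]$ with $\sum_{a\in A}p(a,A)=1$, $p(x,A)=0$ for $x\notin A$, and $p(a,A)>0$ for $a\in A$. $p$ is an unrestricted generalized nested logit if there exist subsets $X_1,\dots,X_K$ of $X$ (not necessarily disjoint), numbers $\alpha^k_x\ge 0$ with $\sum_{k=1}^K\alpha^k_x=1$ for each $x\in X$ and $\alpha^k_x=0$ iff $x\notin X_k$, $u:X\to\mathbb{R}_{++}$ and $\lambda_1,\dots,\lambda_K>0$ such that for every $A\in\mathscr{A}$ and $x\in A$, $p(x,A)=\sum_{k:\,x\in A\cap X_k}\frac{(\alpha^k_x u(x))^{1/\lambda_k}}{\sum_{y\in A\cap X_k}(\alpha^k_y u(y))^{1/\lambda_k}}\cdot\frac{\Big(\sum_{y\in A\cap X_k}(\alpha^k_y u(y))^{1/\lambda_k}\Big)^{\lambda_k}}{\sum_{l:\,A\cap X_l\ne\emptyset}\Big(\sum_{z\in A\cap X_l}(\alpha^l_z u(z))^{1/\lambda_l}\Big)^{\lambda_l}}$. *)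

(* Defs.v *)
From HB Require Import structures.
From mathcomp Require Import all_boot all_order all_algebra.
From mathcomp Require Import all_classical all_reals.
From mathcomp Require Import exp.
Set Implicit Arguments. Unset Strict Implicit. Unset Printing Implicit Defensive.
Import Order.TTheory GRing.Theory Num.Theory.
Local Open Scope ring_scope.

Definition stochastic_choice (R : realType) (X : finType)
  (p : X -> {set X} -> R) : Prop :=
  forall A : {set X}, A != finset.set0 ->
    [/\ forall x, 0 <= p x A <= 1,
        \sum_(a in A) p a A = 1,
        forall x, x \notin A -> p x A = 0
      & forall a, a \in A -> 0 < p a A].

Definition gnl_nestsum (R : realType) (X : finType) (K : nat)
  (Xk : 'I_K -> {set X}) (alpha : 'I_K -> X -> R) (u : X -> R)
  (lam : 'I_K -> R) (k : 'I_K) (A : {set X}) : R :=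
  \sum_(y in A :&: Xk k) powR (alpha k y * u y) (lam k)^-1.

Definition gnl_prob (R : realType) (X : finType) (K : nat)
  (Xk : 'I_K -> {set X}) (alpha : 'I_K -> X -> R) (u : X -> R)
  (lam : 'I_K -> R) (x : X) (A : {set X}) : R :=
  \sum_(k : 'I_K | x \in A :&: Xk k)
     (powR (alpha k x * u x) (lam k)^-1 / gnl_nestsum Xk alpha u lam k A)
     * (powR (gnl_nestsum Xk alpha u lam k A) (lam k)
        / \sum_(l : 'I_K | A :&: Xk l != finset.set0)
             powR (gnl_nestsum Xk alpha u lam l A) (lam l)).

Definition unrestricted_GNL (R : realType) (X : finType)
  (p : X -> {set X} -> R) : Prop :=
  exists (K : nat) (Xk : 'I_K -> {set X}) (alpha : 'I_K -> X -> R)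
         (u : X -> R) (lam : 'I_K -> R),
    [/\ forall k x, 0 <= alpha k x,
        forall x, \sum_(k < K) alpha k x = 1,
        forall k x, alpha k x = 0 <-> x \notin Xk k,
        [/\ forall x, 0 < u x & forall k, 0 < lam k]
      & forall A : {set X}, A != finset.set0 -> forall x, x \in A ->
          p x A = gnl_prob Xk alpha u lam x A].

(* Main.v *)
Require Import Defs.
From HB Require Import structures.
From mathcomp Require Import all_boot all_order all_algebra.
From mathcomp Require Import all_classical all_reals exp.
From mathcomp Require Import ring lra.
Set Implicit Arguments. Unset Strict Implicit. Unset Printing Implicit Defensive.
Import Order.TTheory GRing.Theory Num.Theory.
Local Open Scope ring_scope.

Section Lin.
Variable R : realType.

Lemma bigmax_ge0 (I : finType) (v : I -> R) : 0 <= \big[Num.max/0]_j `|v j|.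
Proof. by apply: (big_ind (fun x => 0 <= x)) => // x y hx hy; rewrite le_max hx. Qed.

Lemma max_bound (I : finType) (v : I -> R) (c q : R) : 0 <= q < 1 ->
  (forall i, `|v i| <= c + q * \big[Num.max/0]_j `|v j|) ->
  forall i, `|v i| <= c / (1 - q).
Proof.
move=> /andP[q0 q1] H i.
set m := \big[Num.max/0]_j `|v j|.
have m0 : 0 <= m by apply: bigmax_ge0.
have hm : m <= c + q * m.
  apply/bigmax_leP; split; last by move=> j _; exact: H.
  by apply: le_trans (H i); rewrite normr_ge0.
have hi : `|v i| <= m by apply: le_bigmax.
rewrite ler_pdivlMr ?subr_gt0 //.
apply: le_trans (_ : m * (1 - q) <= c); first by rewrite ler_wpM2r // subr_ge0 ltW.
lra.
Qed.

Lemma sum_delta (I : finType) (f : I -> R) (i : I) :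
  \sum_j f j * (j == i)%:R = f i.
Proof.
rewrite (bigD1 i) //= eqxx mulr1 big1 ?addr0 // => j hj.
by rewrite (negbTE hj) mulr0.
Qed.

Lemma sum_enumI (I : finType) (F : I -> R) :
  \sum_(k < #|I|) F (enum_val k) = \sum_j F j.
Proof. by rewrite -big_enum_val. Qed.

Lemma lin_solve (I : finType) (M : I -> I -> R) (b : I -> R) (q : R) :
  0 <= q < 1 -> (forall i, \sum_j `|M i j| <= q) ->
  exists t : I -> R, forall i, t i = b i + \sum_j M i j * t j.
Proof.
move=> hq hM.
pose n := #|I|.
pose e := fun k : 'I_n => (enum_val k : I).
pose A : 'M[R]_n := \matrix_(i, j) ((i == j)%:R - M (e j) (e i)).
have hA : A \in unitmx.
  rewrite unitmxE unitfE; apply/negP => /det0P [v nv0 vA0].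
  have key : forall i, v 0 i = \sum_j M (e i) (e j) * v 0 j.
    move=> i; move/matrixP: vA0 => /(_ 0 i); rewrite !mxE.
    under eq_bigr => j _ do rewrite mxE mulrBr.
    rewrite big_split /= sumrN sum_delta => /eqP; rewrite subr_eq0 => /eqP ->.
    by apply: eq_bigr => j _; rewrite mulrC.
  have hb : forall i, `|v 0 i| <= 0 / (1 - q).
    apply: max_bound => // i; rewrite add0r key.
    apply: le_trans (ler_norm_sum _ _ _) _.
    set m := \big[Num.max/0]_j `|v 0 j|.
    apply: le_trans (_ : \sum_j `|M (e i) (e j)| * m <= _).
      apply: ler_sum => j _; rewrite normrM ler_wpM2l //.
      exact: (le_bigmax 0 (fun j => `|v 0 j|)).
    rewrite -mulr_suml ler_wpM2r //; try exact: bigmax_ge0.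
    by rewrite /e (sum_enumI (fun j => `|M (enum_val i) j|)).
  move/negP: nv0; apply; apply/eqP/rowP => i; rewrite mxE.
  by apply/eqP; rewrite -normr_eq0 eq_le normr_ge0 andbT; move: (hb i); rewrite mul0r.
pose brow : 'rV[R]_n := \row_j b (e j).
pose tv := brow *m invmx A.
have hw : tv *m A = brow by rewrite /tv -mulmxA mulVmx // mulmx1.
clearbody tv.
exists (fun x => tv 0 (enum_rank x)) => x.
move/matrixP: hw => /(_ 0 (enum_rank x)); rewrite mxE [in X in _ = X -> _]mxE /e enum_rankK.
under eq_bigr => j _ do rewrite mxE mulrBr.
rewrite big_split /= sumrN sum_delta => <-.
rewrite /e enum_rankK -(sum_enumI (fun j => M x j * tv 0 (enum_rank j))).
suff -> : \sum_(k < #|I|) M x (enum_val k) * tv 0 (enum_rank (enum_val k))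
  = \sum_(i < n) tv 0 i * M x (enum_val i) by rewrite subrK.
by apply: eq_bigr => k _; rewrite enum_valK mulrC.
Qed.
End Lin.

Section Lin2.
Variable R : realType.

Lemma pos_solve (I : finType) (K : I -> I -> R) :
  (forall i j, 0 <= K i j) -> (forall i, \sum_j K i j <= 3^-1) ->
  exists t : I -> R, (forall i, t i = 1 - \sum_j K i j * t j) /\ (forall i, 2^-1 <= t i).
Proof.
move=> K0 Ks.
have hq : 0 <= (3^-1 : R) < 1 by apply/andP; split; lra.
have hM : forall i, \sum_j `|- K i j| <= 3^-1.
  by move=> i; under eq_bigr => j _ do rewrite normrN ger0_norm //; exact: Ks.
have [t ht] := lin_solve (fun i => 1) hq hM.
have ht' : forall i, t i = 1 - \sum_j K i j * t j.
  by move=> i; rewrite ht -sumrN; congr (_ + _); apply: eq_bigr => j _; rewrite mulNr.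
exists t; split => // i.
have hb : forall i, `|t i| <= 1 / (1 - 3^-1).
  apply: max_bound => // i0; rewrite ht' (le_trans (ler_normB _ _)) // normr1 lerD2l.
  apply: le_trans (ler_norm_sum _ _ _) _.
  set m := \big[Num.max/0]_j `|t j|.
  apply: le_trans (_ : \sum_j K i0 j * m <= _).
    apply: ler_sum => j _; rewrite normrM ger0_norm // ler_wpM2l //.
    exact: (le_bigmax 0 (fun j => `|t j|)).
  by rewrite -mulr_suml ler_wpM2r //; exact: bigmax_ge0.
rewrite ht'.
have : \sum_j K i j * t j <= 2^-1.
  apply: le_trans (_ : \sum_j K i j * (3 / 2) <= _).
    apply: ler_sum => j _; apply: ler_wpM2l => //.
    apply: le_trans (ler_norm _) _; apply: le_trans (hb j) _; rewrite (_ : 1 / (1 - 3^-1) = (3 / 2 : R)) //; field.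
    by [].
  rewrite -mulr_suml; have := Ks i; set s := \sum_j K i j => h1.
  lra.
lra.
Qed.

Lemma bern (d : R) (k : nat) : 0 <= d <= 1 -> (1 - d) ^+ k * (1 + k%:R * d) <= 1.
Proof.
move=> /andP[d0 d1]; elim: k => [|k IH]; first by rewrite expr0 mul0r addr0 mul1r.
rewrite exprS -natr1.
have a0 : 0 <= (1 - d) ^+ k by rewrite exprn_ge0 // subr_ge0.
set a := (1 - d) ^+ k in a0 IH *.
have k0 : 0 <= (k%:R : R) by [].
have -> : (1 - d) * a * (1 + (k%:R + 1) * d) = a * (1 + k%:R * d) - a * (d * d) * (k%:R + 1) by ring.
have : 0 <= a * (d * d) * (k%:R + 1) by rewrite !mulr_ge0 // addr_ge0.
lra.
Qed.

Lemma geom_small (d e : R) : 0 < d <= 1 -> 0 < e -> exists k : nat, (1 - d) ^+ k <= e.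
Proof.
move=> /andP[d0 d1] e0.
exists (Num.trunc (e^-1 / d)).+1.
set k := (Num.trunc _).+1.
have hk : e^-1 / d < k%:R by exact: truncnS_gt.
have := bern k (_ : 0 <= d <= 1); rewrite ltW // d1 => /(_ isT) hb.
have a0 : 0 <= (1 - d) ^+ k by rewrite exprn_ge0 // subr_ge0.
have kd : e^-1 < k%:R * d by rewrite -ltr_pdivrMr.
have : 1 < e * (k%:R * d) by rewrite -ltr_pdivrMl // mulr1.
move: kd hb a0; set K := k%:R * d => _ hb a0 h.
nra.
Qed.

End Lin2.

Import Order.TTheory GRing.Theory Num.Theory.
Local Open Scope ring_scope.

Section Main.
Variables (R : realType) (X : finType) (p : X -> {set X} -> R).
Hypothesis hp : stochastic_choice p.

Lemma p_gt0 x (A : {set X}) : x \in A -> 0 < p x A.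
Proof.
move=> xA; have nA : A != finset.set0 by apply/set0Pn; exists x.
by case: (hp nA) => _ _ _; apply.
Qed.


Lemma p_le1 x (A : {set X}) : x \in A -> p x A <= 1.
Proof.
move=> xA; have nA : A != finset.set0 by apply/set0Pn; exists x.
by case: (hp nA) => h _ _ _; case/andP: (h x).
Qed.

Lemma p_sum (A : {set X}) : A != finset.set0 -> \sum_(a in A) p a A = 1.
Proof. by move=> nA; case: (hp nA). Qed.

Definition I : finType := ({set X} * X)%type.
Definition gen (i : I) := i.2 \in i.1.

Definition S0 := \sum_(i : I | gen i) (p i.2 i.1)^-1.
Definition pi := (1 + S0)^-1.

Lemma S0_ge0 : 0 <= S0.
Proof. by apply: sumr_ge0 => i gi; rewrite invr_ge0 ltW // p_gt0. Qed.

Lemma pi_gt0 : 0 < pi.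
Proof. by rewrite invr_gt0 (lt_le_trans ltr01) // lerDl S0_ge0. Qed.

Lemma pi_le1 : pi <= 1.
Proof. have h := S0_ge0; rewrite invf_le1; lra. Qed.

Lemma pi_le (i : I) : gen i -> pi <= p i.2 i.1.
Proof.
move=> gi; have p0 := p_gt0 gi.
have : (p i.2 i.1)^-1 <= S0.
  rewrite /S0 (bigD1 i) //= lerDl; apply: sumr_ge0 => j /andP[gj _].
  by rewrite invr_ge0 ltW // p_gt0.
move=> h; rewrite /pi -(invrK (p _ _)) lef_pV2 ?posrE ?invr_gt0 //; last by have := S0_ge0; lra.
lra.
Qed.


Definition Q : R := (#|I|.+1)%:R.
Definition eta := pi / (3 * Q).
Definition N := 3 * Q / pi.
Definition d (E : {set X}) := N ^+ #|E|.

Lemma Q_ge1 : 1 <= Q.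
Proof. by rewrite /Q ler1n. Qed.

Lemma card_le_Q : (#|I|%:R : R) <= Q.
Proof. by rewrite /Q ler_nat. Qed.

Lemma eta_gt0 : 0 < eta.
Proof. by rewrite /eta divr_gt0 ?pi_gt0 // mulr_gt0 //; have := Q_ge1; lra. Qed.

Lemma eta_le1 : eta <= 1.
Proof.
rewrite /eta ler_pdivrMr; last by have := Q_ge1; lra.
by have := Q_ge1; have := pi_le1; lra.
Qed.

Lemma N_ge1 : 1 <= N.
Proof.
rewrite /N ler_pdivlMr ?pi_gt0 // mul1r.
by have := Q_ge1; have := pi_le1; lra.
Qed.

Lemma invN : N^-1 = pi / (3 * Q).
Proof. by rewrite /N invf_div. Qed.

Lemma d_gt0 E : 0 < d E.
Proof. by rewrite /d exprn_gt0 //; have := N_ge1; lra. Qed.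

Lemma d_ge1 E : 1 <= d E.
Proof. by rewrite /d exprn_ege1 // N_ge1. Qed.

Lemma d_mono (E A : {set X}) : (#|E| <= #|A|)%N -> d E <= d A.
Proof. by move=> h; rewrite /d ler_weXn2l // N_ge1. Qed.

Lemma d_lt (E A : {set X}) : (#|E| < #|A|)%N -> d E <= d A / N.
Proof.
move=> h; have N1 := N_ge1; rewrite ler_pdivlMr; last by lra.
rewrite /d -exprSr ler_weXn2l //.
Qed.

Definition v (j : I) (y : X) := if y == j.2 then 1 else eta.
Definition Xs (j : I) := if j.2 \in j.1 then j.1 else finset.set0.
Definition V (j : I) (A : {set X}) := \sum_(y in A :&: Xs j) v j y.

Lemma v_gt0 j y : 0 < v j y.
Proof. by rewrite /v; case: ifP => _ //; exact: eta_gt0. Qed.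

Lemma v_le1 j y : v j y <= 1.
Proof. by rewrite /v; case: ifP => _ //; exact: eta_le1. Qed.

Lemma v_ge_eta j y : eta <= v j y.
Proof. by rewrite /v; case: ifP => _ //; exact: eta_le1. Qed.

Lemma V_ge0 j (A : {set X}) : 0 <= V j A.
Proof. by apply: sumr_ge0 => y _; exact: ltW (v_gt0 _ _). Qed.

Lemma V_gt0 j (A : {set X}) x : x \in A :&: Xs j -> 0 < V j A.
Proof.
move=> hx; rewrite /V (bigD1 x) //=; apply: ltr_pwDl; first exact: v_gt0.
by apply: sumr_ge0 => y _; exact: ltW (v_gt0 _ _).
Qed.

Lemma V_le j (A : {set X}) : V j A <= #|X|%:R.
Proof.
apply: le_trans (_ : \sum_(y in A :&: Xs j) (1 : R) <= _).
  by apply: ler_sum => y _; exact: v_le1.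
rewrite sumr_const ler_nat; exact: max_card.
Qed.

Definition r : R := 1 - eta / (#|X|.+1)%:R.

Lemma rho_le (j : I) (A : {set X}) : j.2 \in j.1 -> ~~ (j.1 \subset A) ->
  V j A / V j j.1 <= r.
Proof.
move=> zE nsub.
have XsE : Xs j = j.1 by rewrite /Xs zE.
have VE0 : 0 < V j j.1 by apply: (@V_gt0 _ _ j.2); rewrite XsE inE zE.
have [y0 /andP[y0E y0A]] : exists y0, (y0 \in j.1) && (y0 \notin A).
  move/subsetPn: nsub => [y hy hny]; by exists y; rewrite hy hny.
have split : V j j.1 = V j A + \sum_(y in j.1 | y \notin A) v j y.
  rewrite /V XsE finset.setIid (bigID (fun y => y \in A)) /=; congr (_ + _).
  by apply: eq_bigl => y; rewrite !inE andbC.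
have hs : eta <= \sum_(y in j.1 | y \notin A) v j y.
  rewrite (bigD1 y0) /=; last by rewrite y0E.
  apply: le_trans (v_ge_eta j y0) _; rewrite lerDl.
  by apply: sumr_ge0 => y _; exact: ltW (v_gt0 _ _).
have hVle : V j j.1 <= (#|X|.+1)%:R by apply: le_trans (V_le _ _) _; rewrite ler_nat.
rewrite /r ler_pdivrMr //.
have e0 := eta_gt0.
have : eta / (#|X|.+1)%:R * V j j.1 <= eta.
  rewrite mulrC mulrA ler_pdivrMr ?ltr0Sn //.
  by rewrite mulrC ler_wpM2l // ltW.
rewrite mulrBl mul1r; move: split hs; set c := eta / _ * _; set s := \sum_(y in _ | _) _; lra.
Qed.


Lemma V_split (j : I) (A : {set X}) : j.2 \in j.1 ->
  V j j.1 = V j A + \sum_(y in j.1 | y \notin A) v j y.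
Proof.
move=> zE; have XsE : Xs j = j.1 by rewrite /Xs zE.
rewrite /V XsE finset.setIid (bigID (fun y => y \in A)) /=; congr (_ + _).
by apply: eq_bigl => y; rewrite !inE andbC.
Qed.

Lemma V_mono (j : I) (A : {set X}) : j.2 \in j.1 -> V j A <= V j j.1.
Proof.
move=> zE; rewrite (V_split A zE) lerDl.
by apply: sumr_ge0 => y _; exact: ltW (v_gt0 _ _).
Qed.

Definition C th (i j : I) :=
  if i.2 \in i.1 :&: Xs j then v j i.2 * V j i.1 ^+ th else 0.
Definition g th (j : I) := if gen j then d j.1 * p j.2 j.1 / V j j.1 ^+ th else 0.
Definition Kc th (i j : I) :=
  if gen i && (j != i) then g th j * C th i j / (d i.1 * p i.2 i.1) else 0.

Lemma C_ge0 th i j : 0 <= C th i j.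
Proof.
rewrite /C; case: ifP => // _; rewrite mulr_ge0 ?exprn_ge0 ?V_ge0 //.
exact: ltW (v_gt0 _ _).
Qed.

Lemma g_ge0 th j : 0 <= g th j.
Proof.
rewrite /g; case: ifP => // zE.
by rewrite divr_ge0 ?exprn_ge0 ?V_ge0 // mulr_ge0 ?ltW ?d_gt0 ?p_gt0.
Qed.

Lemma Kc_ge0 th i j : 0 <= Kc th i j.
Proof.
rewrite /Kc; case: ifP => // /andP[gi _].
by rewrite divr_ge0 ?mulr_ge0 ?g_ge0 ?C_ge0 ?ltW ?d_gt0 ?p_gt0.
Qed.

Lemma Kc_le th (hth : N ^+ #|X| * r ^+ th <= pi / (3 * Q)) i j :
  Kc th i j <= (3 * Q)^-1.
Proof.
have Q1 := Q_ge1.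
have hQ : 0 <= (3 * Q)^-1 by rewrite invr_ge0; lra.
rewrite /Kc; case: ifP => // /andP[gi nji].
rewrite /C; case: ifP => hx; last by rewrite mulr0 mul0r.
move: i j gi nji hx => [A x] [E z] /= xA nji hx.
have zE : z \in E.
  by move: hx; rewrite /Xs /=; case: ifP => // _; rewrite finset.setI0 inE.
have XsE : Xs (E, z) = E by rewrite /Xs /= zE.
rewrite XsE in hx; case/setIP: hx => _ xE.
have pA := p_gt0 xA; have dA := d_gt0 A; have pi0 := pi_gt0.
rewrite ler_pdivrMr ?mulr_gt0 //.
have VE0 : 0 < V (E, z) E by apply: (@V_gt0 _ _ z); rewrite XsE inE zE.
have gC : g th (E, z) * (v (E, z) x * V (E, z) A ^+ th) =
    d E * p z E * v (E, z) x * (V (E, z) A / V (E, z) E) ^+ th.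
  rewrite /g /gen /= zE expr_div_n; field; rewrite expf_neq0 //; lra.
rewrite gC.
set rho := V (E, z) A / V (E, z) E.
have rho0 : 0 <= rho by rewrite divr_ge0 ?V_ge0.
have rho1 : rho <= 1 by rewrite ler_pdivrMr // mul1r (V_mono A (zE : (E, z).2 \in (E, z).1)).
have pE0 := p_gt0 zE; have pE1 := p_le1 zE.
have dE := d_gt0 E.
have v1 := v_le1 (E, z) x; have v0 := v_gt0 (E, z) x.
have rt1 : rho ^+ th <= 1 by rewrite exprn_ile1.
have rt0 : 0 <= rho ^+ th by rewrite exprn_ge0.
suff : d E * p z E * v (E, z) x * rho ^+ th <= d A * (pi / (3 * Q)).
  move=> h; apply: le_trans h _.
  have -> : d A * (pi / (3 * Q)) = (d A * pi) * (3 * Q)^-1 by rewrite mulrA.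
  rewrite [X in _ <= X]mulrC ler_wpM2r //.
  by apply: ler_wpM2l; [exact: ltW | exact: (@pi_le (A, x))].
have eN : pi / (3 * Q) = N^-1 by rewrite invN.
have N1 := N_ge1.
case: (boolP (E \subset A)) => hsub.
  have rho_1 : rho = 1.
    rewrite /rho; suff -> : V (E, z) A = V (E, z) E by rewrite divff //; lra.
    by rewrite /V XsE finset.setIid (finset.setIidPr hsub).
  rewrite rho_1 expr1n mulr1.
  case: (eqVneq z x) => hzx.
    subst z.
    have hEA : E != A by apply: contraNneq nji => ->.
    have hc : (#|E| < #|A|)%N by apply: proper_card; rewrite finset.properEneq hEA hsub.
    have := d_lt hc; rewrite eN /v /= eqxx mulr1.
    have h1 : d E * p x E <= d E := ler_piMr (ltW dE) pE1.
    by move=> h2; apply: le_trans h1 _; exact: h2.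
  have -> : v (E, z) x = eta by rewrite /v /= eq_sym (negbTE hzx).
  have e0 := eta_gt0.
  apply: le_trans (_ : d E * eta <= _).
    by apply: ler_wpM2r; [exact: ltW | exact: ler_piMr (ltW dE) pE1].
  by apply: ler_wpM2r; [exact: ltW | exact: d_mono (subset_leq_card hsub)].
have hr := rho_le (j := (E, z)) zE hsub.
rewrite -/rho in hr.
have r0 : 0 <= r by apply: le_trans hr.
have hrt : rho ^+ th <= r ^+ th by apply: lerXn2r; rewrite ?nnegrE.
have hdE : d E <= N ^+ #|X| by rewrite /d ler_weXn2l // max_card.
apply: le_trans (_ : N ^+ #|X| * r ^+ th <= _); last first.
  apply: le_trans hth _; rewrite -[X in X <= _]mul1r ler_wpM2r ?d_ge1 //.
  by apply: divr_ge0; [exact: ltW | lra].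
apply: le_trans (_ : d E * rho ^+ th <= _); last first.
  exact: ler_pM (ltW dE) rt0 hdE hrt.
apply: (ler_wpM2r rt0); rewrite -mulrA; apply: ler_piMr (ltW dE) _.
exact: mulr_ile1 (ltW pE0) (ltW v0) pE1 v1.
Qed.

Lemma exists_th : exists th : nat, N ^+ #|X| * r ^+ th <= pi / (3 * Q).
Proof.
have Q1 := Q_ge1; have pi0 := pi_gt0; have e0 := eta_gt0; have e1 := eta_le1.
have NX : 0 < N ^+ #|X| by rewrite exprn_gt0 //; have := N_ge1; lra.
have hd : 0 < eta / (#|X|.+1)%:R <= 1.
  apply/andP; split; first by rewrite divr_gt0.
  rewrite ler_pdivrMr ?ltr0Sn // mul1r; apply: le_trans e1 _; by rewrite ler1n.
have he : 0 < pi / (3 * Q) / N ^+ #|X| by rewrite !divr_gt0 //; lra.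
have [k hk] := geom_small hd he.
exists k; rewrite mulrC -ler_pdivlMr //.
Qed.

Lemma Kc_sum th (hth : N ^+ #|X| * r ^+ th <= pi / (3 * Q)) i :
  \sum_j Kc th i j <= 3^-1.
Proof.
apply: le_trans (_ : \sum_(j : I) (3 * Q)^-1 <= _); first by apply: ler_sum => j _; exact: Kc_le.
rewrite sumr_const.
have Q1 := Q_ge1; have hc := card_le_Q.
rewrite (_ : (3 * Q)^-1 *+ #|I| = (3 * Q)^-1 * #|I|%:R); last by rewrite mulr_natr.
apply: le_trans (_ : (3 * Q)^-1 * Q <= _).
  by apply: ler_wpM2l; [rewrite invr_ge0; lra | exact: hc].
rewrite invfM -mulrA mulVf ?mulr1 // gt_eqF //; lra.
Qed.

Section Sol.
Variable th : nat.
Variable t : I -> R.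
Hypothesis ht : forall i, t i = 1 - \sum_j Kc th i j * t j.
Hypothesis ht2 : forall i, 2^-1 <= t i.

Definition sigma (j : I) := t j * g th j.

Lemma T_eq i : gen i -> \sum_j sigma j * C th i j = d i.1 * p i.2 i.1.
Proof.
move=> gi; have gi' : i.2 \in i.1 := gi.
set D := d i.1 * p i.2 i.1.
have D0 : 0 < D by rewrite mulr_gt0 ?d_gt0 ?p_gt0.
have gCii : g th i * C th i i = D.
  have XsE : Xs i = i.1 by rewrite /Xs gi'.
  have VE0 : 0 < V i i.1 by apply: (@V_gt0 _ _ i.2); rewrite XsE inE gi'.
  rewrite /g /C /gen gi' XsE inE gi' /v eqxx mul1r /D.
  rewrite /= -mulrA mulVf ?mulr1 // expf_neq0 // gt_eqF //.
have pt : forall j, sigma j * C th i j = Kc th i j * t j * D + (j == i)%:R * (t i * D).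
  move=> j; rewrite /sigma /Kc gi /=; case: (eqVneq j i) => [->|nji].
    by rewrite /= -gCii; ring.
  rewrite /= (_ : false%:R = 0) // mul0r addr0 [RHS]mulrAC divfK ?gt_eqF //.
  by rewrite [RHS]mulrC mulrA.
under eq_bigr => j _ do rewrite pt.
rewrite big_split /= -mulr_suml.
under [X in _ + X]eq_bigr => j _ do rewrite mulrC.
rewrite sum_delta.
rewrite -mulrDl (_ : _ + t i = 1) ?mul1r //.
by have := ht i; lra.
Qed.


Definition lam := th.+1.
Definition c (j : I) := powR (sigma j) (lam%:R)^-1.
Definition w (j : I) (y : X) := c j * v j y.
Definition a (j : I) (y : X) := if y \in Xs j then w j y ^+ lam else 0.
Definition uu (y : X) := \sum_j a j y.

Lemma t_gt0 j : 0 < t j.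
Proof. by have := ht2 j; lra. Qed.

Lemma sigma_ge0 j : 0 <= sigma j.
Proof. by rewrite /sigma mulr_ge0 ?g_ge0 // ltW // t_gt0. Qed.

Lemma Xs_gen j y : y \in Xs j -> gen j.
Proof. by rewrite /Xs /gen; case: ifP => // _; rewrite inE. Qed.

Lemma Xs_eq j : gen j -> Xs j = j.1.
Proof. by rewrite /Xs /gen => ->. Qed.

Lemma g_gt0 j : gen j -> 0 < g th j.
Proof.
move=> gj; have gj' : j.2 \in j.1 := gj.
have VE0 : 0 < V j j.1 by apply: (@V_gt0 _ _ j.2); rewrite Xs_eq // inE gj'.
by rewrite /g gj divr_gt0 ?exprn_gt0 // mulr_gt0 ?d_gt0 ?p_gt0.
Qed.

Lemma sigma_gt0 j : gen j -> 0 < sigma j.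
Proof. by move=> gj; rewrite /sigma mulr_gt0 ?t_gt0 ?g_gt0. Qed.

Lemma lam_gt0 : (0 : R) < lam%:R.
Proof. by rewrite ltr0n. Qed.

Lemma c_ge0 j : 0 <= c j.
Proof. exact: powR_ge0. Qed.

Lemma c_pow j : c j ^+ lam = sigma j.
Proof.
rewrite -powR_mulrn ?c_ge0 // /c -powRrM mulVf ?powRr1 ?sigma_ge0 //.
by rewrite gt_eqF // lam_gt0.
Qed.

Lemma c_gt0 j : gen j -> 0 < c j.
Proof. by move=> gj; rewrite /c powR_gt0 // sigma_gt0. Qed.

Lemma w_ge0 j y : 0 <= w j y.
Proof. by rewrite /w mulr_ge0 ?c_ge0 // ltW // v_gt0. Qed.

Lemma a_ge0 j y : 0 <= a j y.
Proof. by rewrite /a; case: ifP => // _; rewrite exprn_ge0 // w_ge0. Qed.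

Lemma a_eq0 j y : a j y = 0 <-> y \notin Xs j.
Proof.
rewrite /a; case: ifP => hy /=; split => // h.
move/eqP: h; rewrite expf_eq0 /= /w mulf_eq0 (gt_eqF (v_gt0 _ _)) orbF.
by rewrite (gt_eqF (c_gt0 (Xs_gen hy))).
Qed.

Lemma uu_gt0 y : 0 < uu y.
Proof.
rewrite /uu (bigD1 ([set y], y)) //=; apply: ltr_pwDl; last first.
  by apply: sumr_ge0 => j _; exact: a_ge0.
have gj : gen ([set y], y) by rewrite /gen /= inE.
rewrite /a Xs_eq // inE eqxx exprn_gt0 // /w mulr_gt0 ?v_gt0 //.
exact: c_gt0.
Qed.

Lemma powR_a j y : y \in Xs j -> powR (a j y) (lam%:R)^-1 = w j y.
Proof.
move=> hy; rewrite /a hy -powR_mulrn ?w_ge0 // -powRrM mulfV ?powRr1 ?w_ge0 //.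
by rewrite gt_eqF // lam_gt0.
Qed.

Lemma cV_pow j (A : {set X}) :
  (c j * V j A) ^+ lam = \sum_(y in A) sigma j * C th (A, y) j.
Proof.
rewrite exprMn c_pow /lam exprS mulrCA mulrC.
set K0 := sigma j * V j A ^+ th.
rewrite {1}/V mulr_sumr.
rewrite big_mkcond [RHS]big_mkcond /=; apply: eq_bigr => y _.
rewrite /C /=.
case: (boolP (y \in A :&: Xs j)) => hy.
  by rewrite (setIP hy).1 /K0; ring.
by case: (boolP (y \in A)) => //; rewrite mulr0.
Qed.

Lemma Den_eq (A : {set X}) : A != finset.set0 ->
  \sum_(l : 'I_#|I| | A :&: Xs (enum_val l) != finset.set0)
     powR (c (enum_val l) * V (enum_val l) A) lam%:R = d A.
Proof.
move=> nA.
rewrite big_mkcond /=.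
rewrite (eq_bigr (fun l => (c (enum_val l) * V (enum_val l) A) ^+ lam)); last first.
  move=> l _; case: ifP => h; first by rewrite powR_mulrn // mulr_ge0 ?c_ge0 ?V_ge0.
  move/negbFE/eqP: h => h.
  by rewrite /V h big_set0 mulr0 expr0n.
rewrite (sum_enumI (fun j => (c j * V j A) ^+ lam)).
under eq_bigr => j _ do rewrite cV_pow.
rewrite exchange_big /=.
rewrite (eq_bigr (fun y => d A * p y A)); last first.
  by move=> y yA; rewrite (T_eq (i := (A, y))).
by rewrite -mulr_sumr p_sum // mulr1.
Qed.

Lemma main_GNL : unrestricted_GNL p.
Proof.
pose alpha := fun (k : 'I_#|I|) y => a (enum_val k) y / uu y.
exists #|I|, (fun k => Xs (enum_val k)), alpha, uu, (fun _ => lam%:R).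
have uu0 : forall y, uu y != 0 by move=> y; rewrite gt_eqF // uu_gt0.
have au : forall k y, alpha k y * uu y = a (enum_val k) y.
  by move=> k y; rewrite /alpha divfK.
split.
- by move=> k y; rewrite /alpha divr_ge0 ?a_ge0 // ltW // uu_gt0.
- move=> y; rewrite /alpha -mulr_suml (sum_enumI (fun j => a j y)) -/(uu y).
  by rewrite mulfV.
- move=> k y; rewrite -a_eq0 /alpha; split => [/eqP|->]; last by rewrite mul0r.
  by rewrite mulf_eq0 invr_eq0 (negbTE (uu0 y)) orbF => /eqP.
- by split; [exact: uu_gt0 | move=> _; exact: lam_gt0].
move=> A nA x xA.
rewrite /gnl_prob /gnl_nestsum /=.
have ns : forall k, \sum_(y in A :&: Xs (enum_val k)) powR (alpha k y * uu y) (lam%:R)^-1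
    = c (enum_val k) * V (enum_val k) A.
  move=> k; rewrite /V mulr_sumr; apply: eq_bigr => y /setIP[_ hy].
  by rewrite au powR_a.
have hD : \sum_(l < #|I| | A :&: Xs (enum_val l) != finset.set0)
      (\sum_(y in A :&: Xs (enum_val l)) (alpha l y * uu y) `^ lam%:R^-1) `^ lam%:R = d A.
  by rewrite -(Den_eq nA); apply: eq_bigr => l _; rewrite ns.
rewrite hD.
rewrite (eq_bigr (fun k => (d A)^-1 * (sigma (enum_val k) * C th (A, x) (enum_val k)))); last first.
  move=> k hk; set j := enum_val k.
  have hx := (setIP hk).2; have gj := Xs_gen hx.
  have V0 : 0 < V j A := V_gt0 hk.
  have c0 := c_gt0 gj.
  have dA := d_gt0 A.
  rewrite ns au powR_a // powR_mulrn ?mulr_ge0 ?c_ge0 ?V_ge0 //.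
  rewrite /C /= hk /w -c_pow /lam.
  rewrite /j in V0 c0 *; rewrite exprMn [V _ _ ^+ _.+1]exprS.
  set C1 := c _ ^+ _; set W := V _ _ ^+ th; field.

  by rewrite !gt_eqF.
rewrite -mulr_sumr.
rewrite [X in _ = _ * X](_ : _ = \sum_(k < #|I|) sigma (enum_val k) * C th (A, x) (enum_val k)); last first.
  rewrite [RHS](bigID (fun k => x \in A :&: Xs (enum_val k))) /= [X in _ = _ + X]big1 ?addr0 // => k /negbTE h.
  by rewrite /C /= h mulr0.
rewrite (sum_enumI (fun j => sigma j * C th (A, x) j)) (T_eq (i := (A, x))) //=.
by rewrite mulKf // gt_eqF // d_gt0.
Qed.

End Sol.

End Main.

Unset Implicit Arguments.
Theorem corollary1 (R : realType) (X : finType) (p : X -> {set X} -> R) :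
  stochastic_choice p -> unrestricted_GNL p.
Proof.
move=> hp.
have [th hth] := exists_th hp.
have [t [ht ht2]] := pos_solve (Kc_ge0 hp th) (Kc_sum hp hth).
exact: main_GNL ht ht2.
Qed.
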